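(* Each of the following polynomials is a $\mathbb{Z}_2$-graded polynomial identity of $E_{0^*}\otimes E_0$: (1) $[y_1,y_2,y_3]$ and $[y_1,y_2,z_3]$; (2) $[y_1,z_2,y_3]$; (3) $[y_1,z_2]\circ z_3$; (4) $[z_1\circ z_2,z_3]$; (5) $(z_1\circ z_2)(z_3\circ z_4)-(z_1\circ z_3)(z_2\circ z_4)$; (6) $[x_1,y_2][y_3,x_4]+[x_1,y_3][y_2,x_4]$, for every choice of $x_1\in\{y_1,z_1\}$ and $x_4\in\{y_4,z_4\}$; (7) $[y_1,z_2](z_3\circ z_4)-[y_1,z_3](z_2\circ z_4)$. Equivalently, the $T_2$-ideal $I$ generated by these polynomials is contained in $T_2(E_{0^*}\otimes E_0)$.
   Context: $\mathbb{K}$ is an infinite field of characteristic different from $2$. $E$ is the Grassmann algebra of a vector space with countable basis $e_1,e_2,\dots$ (generated by the $e_i$ with $e_ie_j=-e_je_i$), with canonical $\mathbb{Z}_2$-grading $E=E^{(0)}\oplus E^{(1)}$ (even/odd length monomials). $A=E\otimes E$ has the $\mathbb{Z}_2\times\mathbb{Z}_2$-grading $A_{(a,b)}=E^{(a)}\otimes E^{(b)}$. $E_{0^*}\otimes E_0$ denotes $A$ with the $\mathbb{Z}_2$-grading $A_0=A_{(0,0)}\oplus A_{(1,0)}$, $A_1=A_{(0,1)}\oplus A_{(1,1)}$. $\mathbb{K}\langle Y\cup Z\rangle$ is the free associative algebra on disjoint countable sets $Y=\{y_1,y_2,\dots\}$ (variables of degree $0$) and $Z=\{z_1,z_2,\dots\}$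 (variables of degree $1$). A polynomial $f(y_1,\dots,y_m,z_1,\dots,z_n)$ is a $\mathbb{Z}_2$-graded identity of a $\mathbb{Z}_2$-graded algebra $A=A_0\oplus A_1$ if $f(a_1,\dots,a_m,b_1,\dots,b_n)=0$ for all $a_i\in A_0$, $b_i\in A_1$; $T_2(A)$ is the set of these. A $T_2$-ideal is an ideal of $\mathbb{K}\langle Y\cup Z\rangle$ stable under all graded endomorphisms (those sending each $y_i$ to a polynomial of degree $0$ and each $z_i$ to a polynomial of degree $1$). Notation: $[a,b]=ab-ba$, $[a_1,\dots,a_n]=[[a_1,\dots,a_{n-1}],a_n]$, $a\circ b=ab+ba$. *)

(* Defs.v *)
(* Concrete model of A = E (x) E over a field K, where E is the
   Grassmann algebra on generators e_0, e_1, e_2, ... (countable basis).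
   A basis of E (x) E is { e_S (x) e_T } with S, T finite sets of indices,
   represented as strictly increasing lists of naturals.  An element of A is
   given by its coefficient function on such pairs (S, T). *)
From HB Require Import structures.
From mathcomp Require Import all_boot all_order all_algebra.
Set Implicit Arguments. Unset Strict Implicit. Unset Printing Implicit Defensive.
Import GRing.Theory.
Local Open Scope ring_scope.

Definition mono := (seq nat * seq nat)%type.

Definition canon (s : seq nat) : bool := sorted ltn s.
Definition canonm (m : mono) : bool := canon m.1 && canon m.2.

(* number of inversions i in s1, j in s2 with j < i : e_{s1} e_{s2} = (-1)^inv e_{s1 u s2} *)
Definition inv_count (s1 s2 : seq nat) : nat :=
  (\sum_(i <- s1) count (fun j => j < i) s2)%N.

Section GrassTensor.
Variable K : fieldType.

Definition A := mono -> K.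

Definition gsign (s1 s2 : seq nat) : K := (-1) ^+ inv_count s1 s2.

Definition azero : A := fun _ => 0.
Definition aadd (a b : A) : A := fun m => a m + b m.
Definition aopp (a : A) : A := fun m => - a m.
Definition asub (a b : A) : A := aadd a (aopp b).

(* product in E (x) E (ordinary tensor product of algebras):
   (e_S1 (x) e_T1)(e_S2 (x) e_T2) = (e_S1 e_S2) (x) (e_T1 e_T2).
   The coefficient at canonical (S,T) sums over all splittings S = S1 u S2,
   T = T1 u T2 (given by bit masks). *)
Definition amul (a b : A) : A := fun m =>
  if canonm m then
    \sum_(u : (size m.1).-tuple bool) \sum_(v : (size m.2).-tuple bool)
      gsign (mask u m.1) (mask (map negb u) m.1) *
      gsign (mask v m.2) (mask (map negb v) m.2) *
      a (mask u m.1, mask v m.2) * b (mask (map negb u) m.1, mask (map negb v) m.2)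
  else 0.

Definition acomm (a b : A) : A := asub (amul a b) (amul b a).
Definition ajord (a b : A) : A := aadd (amul a b) (amul b a).
Definition acomm3 (a b c : A) : A := acomm (acomm a b) c.

Definition is_elt (a : A) : Prop :=
  (forall m, a m != 0 -> canonm m) /\
  exists N : nat, forall m, a m != 0 -> all (fun i => (i < N)%N) (m.1 ++ m.2).

(* Z2-grading of E_{0*} (x) E_0 : A_0 = E^(0)(x)E^(0) + E^(1)(x)E^(0),
   A_1 = E^(0)(x)E^(1) + E^(1)(x)E^(1); i.e. the degree is the parity of the
   second tensor factor.  homog d a  <->  a \in A_d. *)
Definition homog (d : bool) (a : A) : Prop :=
  is_elt a /\ forall m, a m != 0 -> odd (size m.2) = d.

Definition is_zero (a : A) : Prop := forall m, a m = 0.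

End GrassTensor.

(* Main.v *)
Require Import Defs.
From HB Require Import structures.
From mathcomp Require Import all_boot all_order all_algebra.
From mathcomp Require Import ring.
From Stdlib Require Import FunctionalExtensionality.
Import GRing.Theory.
Local Open Scope ring_scope.
Set Implicit Arguments. Unset Strict Implicit.

Lemma sum_tupleS (R : nmodType) n (T : finType) (G : n.+1.-tuple T -> R) :
  \sum_(t : n.+1.-tuple T) G t = \sum_(x : T) \sum_(t : n.-tuple T) G [tuple of x :: t].
Proof.
rewrite pair_big /=.
rewrite (reindex (fun p : T * n.-tuple T => [tuple of p.1 :: p.2])) //=.
exists (fun t => (thead t, [tuple of behead t])) => [[x t] _|t _] /=.
  by congr pair; apply: val_inj.
by rewrite [RHS]tuple_eta; apply: val_inj.
Qed.

Fixpoint splits (s : seq nat) : seq (seq nat * seq nat) :=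
  match s with
  | [::] => [:: ([::], [::])]
  | x :: s' => [seq (x :: pq.1, pq.2) | pq <- splits s'] ++
               [seq (pq.1, x :: pq.2) | pq <- splits s']
  end.

Section S.
Variable R : nmodType.

Lemma sum_splits (s : seq nat) (F : seq nat -> seq nat -> R) :
  \sum_(u : (size s).-tuple bool) F (mask u s) (mask (map negb u) s)
  = \sum_(pq <- splits s) F pq.1 pq.2.
Proof.
elim: s F => [|x s IH] F.
  by rewrite big_seq1 /= (big_pred1 [tuple]) // => t /=; symmetry; apply/eqP; exact: tuple0.
rewrite /= (@sum_tupleS R (size s) bool (fun u : (size s).+1.-tuple bool => F (mask u (x :: s)) (mask (map negb u) (x :: s)))).
rewrite big_bool /= big_cat /= !big_map.
by rewrite (IH (fun p q => F (x :: p) q)) (IH (fun p q => F p (x :: q))).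
Qed.

Lemma splits_assoc (s : seq nat) (G : seq nat -> seq nat -> seq nat -> R) :
  \sum_(tr <- splits s) \sum_(pq <- splits tr.1) G pq.1 pq.2 tr.2
  = \sum_(pt <- splits s) \sum_(qr <- splits pt.2) G pt.1 qr.1 qr.2.
Proof.
elim: s G => [|x s IH] G.
  by rewrite !big_cons !big_nil.
rewrite /= !big_cat /= !big_map /=.
under eq_bigr do rewrite big_cat /= !big_map.
rewrite big_split /=.
under [X in _ = _ + X]eq_bigr do rewrite big_cat !big_map.
rewrite [X in _ = _ + X]big_split /=.
rewrite -(IH (fun p q r => G (x :: p) q r)) -(IH (fun p q r => G p (x :: q) r))
        -(IH (fun p q r => G p q (x :: r))).
by rewrite addrA.
Qed.

Lemma splits_swap (s : seq nat) (F : seq nat -> seq nat -> R) :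
  \sum_(pq <- splits s) F pq.1 pq.2 = \sum_(pq <- splits s) F pq.2 pq.1.
Proof.
elim: s F => [|x s IH] F; first by rewrite !big_seq1.
rewrite /= !big_cat !big_map /=.
by rewrite (IH (fun p q => F (x :: p) q)) (IH (fun p q => F p (x :: q))) addrC.
Qed.
End S.

Lemma splits_perm s pq : pq \in splits s -> perm_eq s (pq.1 ++ pq.2).
Proof.
elim: s pq => [|x s IH] [p q] /=; first by rewrite inE => /eqP[-> ->].
rewrite mem_cat => /orP[] /mapP[[p' q'] /IH /= H [-> ->]] /=.
  by rewrite perm_cons.
by rewrite perm_sym -(cat1s x q') perm_catCA /= perm_cons perm_sym.
Qed.

Lemma splits_sub s pq : pq \in splits s -> subseq pq.1 s && subseq pq.2 s.
Proof.
elim: s pq => [|x s IH] [p q] /=; first by rewrite inE => /eqP[-> ->].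
rewrite mem_cat => /orP[] /mapP[[p' q'] /IH /andP[H1 H2] [-> ->]]; apply/andP; split.
- by rewrite /= eqxx.
- exact: subseq_trans H2 (subseq_cons s x).
- exact: subseq_trans H1 (subseq_cons s x).
- by rewrite /= eqxx.
Qed.

Lemma count_sum (T : Type) (a : pred T) s : count a s = (\sum_(j <- s) a j)%N.
Proof. by elim: s => [|y s IH]; rewrite ?big_nil ?big_cons //= IH. Qed.

Lemma inv_count_catl p q r : inv_count (p ++ q) r = (inv_count p r + inv_count q r)%N.
Proof. by rewrite /inv_count big_cat. Qed.

Lemma inv_count_perml t t' r : perm_eq t t' -> inv_count t r = inv_count t' r.
Proof. by move=> H; rewrite /inv_count (perm_big _ H). Qed.

Lemma inv_count_catr p q r : inv_count p (q ++ r) = (inv_count p q + inv_count p r)%N.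
Proof.
by rewrite /inv_count -big_split /=; apply: eq_bigr => i _; rewrite count_cat.
Qed.

Lemma inv_count_permr p r r' : perm_eq r r' -> inv_count p r = inv_count p r'.
Proof.
by move=> /permP H; rewrite /inv_count; apply: eq_bigr => i _; rewrite H.
Qed.

Lemma inv_count_swap p q : (forall i, i \in p -> i \notin q) ->
  (inv_count p q + inv_count q p = size p * size q)%N.
Proof.
move=> Hpq.
have -> : inv_count q p = (\sum_(i <- p) count (fun j => i < j) q)%N.
  rewrite /inv_count.
  under eq_bigr do rewrite count_sum.
  rewrite exchange_big /=.
  by apply: eq_bigr => i _; rewrite count_sum.
rewrite /inv_count -big_split /=.
rewrite big_seq (eq_bigr (fun _ => size q)); last first.
  move=> i /Hpq; elim: q {Hpq} => //= j q IH; rewrite inE negb_or => /andP[ne nq].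
  rewrite addnACA IH //; case: ltngtP ne => //; by rewrite eq_sym => ->.
rewrite -big_seq; elim: p {Hpq} => [|y p IH]; first by rewrite big_nil.
by rewrite big_cons IH.
Qed.

Section Alg.
Variable K : fieldType.
Local Notation g := (gsign K).
Local Notation A := (A K).

Lemma gsign_catl p q r : g (p ++ q) r = g p r * g q r.
Proof. by rewrite /gsign inv_count_catl exprD. Qed.
Lemma gsign_catr p q r : g p (q ++ r) = g p q * g p r.
Proof. by rewrite /gsign inv_count_catr exprD. Qed.
Lemma gsign_perml t t' r : perm_eq t t' -> g t r = g t' r.
Proof. by move=> H; rewrite /gsign (inv_count_perml _ H). Qed.
Lemma gsign_permr p r r' : perm_eq r r' -> g p r = g p r'.
Proof. by move=> H; rewrite /gsign (inv_count_permr _ H). Qed.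
Lemma gsign_sq p q : g p q * g p q = 1.
Proof. by rewrite /gsign -exprD -signr_odd addnn odd_double. Qed.

Definition conv (s : seq nat) (F : seq nat -> seq nat -> K) : K :=
  \sum_(pq <- splits s) g pq.1 pq.2 * F pq.1 pq.2.

Lemma conv_ext_in s F G : (forall p q, (p, q) \in splits s -> F p q = G p q) ->
  conv s F = conv s G.
Proof.
by move=> H; rewrite /conv big_seq [RHS]big_seq; apply: eq_bigr => -[p q] /H /= ->.
Qed.

Lemma conv_mulr s F c : conv s F * c = conv s (fun p q => F p q * c).
Proof. by rewrite /conv mulr_suml; apply: eq_bigr => i _; rewrite mulrA. Qed.

Lemma conv_mull s F c : c * conv s F = conv s (fun p q => c * F p q).
Proof. by rewrite /conv mulr_sumr; apply: eq_bigr => i _; rewrite mulrCA. Qed.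

Lemma conv_add s F G : conv s (fun p q => F p q + G p q) = conv s F + conv s G.
Proof. by rewrite /conv -big_split; apply: eq_bigr => i _; rewrite mulrDr. Qed.

Lemma conv_exch s t (X : seq nat -> seq nat -> seq nat -> seq nat -> K) :
  conv s (fun p q => conv t (X p q)) = conv t (fun p' q' => conv s (fun p q => X p q p' q')).
Proof.
rewrite /conv; under eq_bigr do rewrite mulr_sumr.
rewrite exchange_big /=; apply: eq_bigr => i _; rewrite mulr_sumr.
by apply: eq_bigr => j _; rewrite mulrCA.
Qed.

Lemma conv_assoc s (H : seq nat -> seq nat -> seq nat -> K) :
  conv s (fun t r => conv t (fun p q => H p q r)) =
  conv s (fun p t => conv t (fun q r => H p q r)).
Proof.
rewrite /conv.
transitivity (\sum_(tr <- splits s) \sum_(pq <- splits tr.1)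
   (g pq.1 pq.2 * g pq.1 tr.2 * g pq.2 tr.2 * H pq.1 pq.2 tr.2)).
  apply: eq_bigr => -[t r] _ /=; rewrite mulr_sumr big_seq [RHS]big_seq.
  apply: eq_bigr => -[p q] /splits_perm /= Ht.
  by rewrite (gsign_perml _ Ht) gsign_catl; ring.
rewrite (splits_assoc s (fun p q r => g p q * g p r * g q r * H p q r)).
apply: eq_bigr => -[p t] _ /=; rewrite mulr_sumr big_seq [RHS]big_seq.
apply: eq_bigr => -[q r] /splits_perm /= Ht.
by rewrite (gsign_permr _ Ht) gsign_catr; ring.
Qed.

Lemma conv_swap s F : uniq s ->
  conv s F = conv s (fun p q => (-1) ^+ (size p * size q) * F q p).
Proof.
move=> us; rewrite /conv (splits_swap _ (fun p q => g p q * F p q)).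
rewrite big_seq [RHS]big_seq; apply: eq_bigr => -[p q] /splits_perm /= Hp.
have Hd : forall i, i \in p -> i \notin q.
  move=> i ip; apply/negP => iq.
  move: us; rewrite (perm_uniq Hp) cat_uniq => /and3P[_ /hasP[]]; by exists i.
rewrite -(inv_count_swap Hd) -/(gsign K p q).
have -> : (-1) ^+ (inv_count p q + inv_count q p) = g p q * g q p :> K.
  by rewrite /gsign exprD.
by rewrite !mulrA gsign_sq mul1r.
Qed.

Lemma conv_eq s F G : (forall p q, F p q = G p q) -> conv s F = conv s G.
Proof. by move=> H; apply: conv_ext_in => p q _; apply: H. Qed.

Lemma canon_splits s pq : canon s -> pq \in splits s -> canon pq.1 && canon pq.2.
Proof.
move=> cs /splits_sub /andP[h1 h2].
by rewrite /canon (subseq_sorted ltn_trans h1 cs) (subseq_sorted ltn_trans h2 cs).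
Qed.

Lemma amulE (a b : A) m : amul a b m =
  if canonm m then conv m.1 (fun p q => conv m.2 (fun p' q' => a (p, p') * b (q, q')))
  else 0.
Proof.
rewrite /amul; case: ifP => // _.
have E1 := sum_splits m.1 (fun p q => \sum_(v : (size m.2).-tuple bool)
   g p q * g (mask v m.2) (mask (map negb v) m.2) * a (p, mask v m.2) * b (q, mask (map negb v) m.2)).
rewrite /= in E1; rewrite E1 /conv; apply: eq_bigr => pq _.
have E2 := sum_splits m.2 (fun p' q' => g pq.1 pq.2 * g p' q' * a (pq.1, p') * b (pq.2, q')).
rewrite /= in E2; rewrite E2 mulr_sumr; apply: eq_bigr => pq' _; ring.
Qed.

Definition ascale (c : K) (a : A) : A := fun m => c * a m.

Lemma aoppE (a : A) : aopp a = ascale (-1) a.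
Proof. by apply: functional_extensionality => m; rewrite /aopp /ascale mulN1r. Qed.

Lemma amulDl (a b c : A) : amul (aadd a b) c = aadd (amul a c) (amul b c).
Proof.
apply: functional_extensionality => m; rewrite /aadd !amulE; case: ifP => _; last by rewrite addr0.
rewrite -conv_add; apply: conv_eq => p q; rewrite -conv_add; apply: conv_eq => p' q'.
by rewrite mulrDl.
Qed.

Lemma amulDr (a b c : A) : amul a (aadd b c) = aadd (amul a b) (amul a c).
Proof.
apply: functional_extensionality => m; rewrite /aadd !amulE; case: ifP => _; last by rewrite addr0.
rewrite -conv_add; apply: conv_eq => p q; rewrite -conv_add; apply: conv_eq => p' q'.
by rewrite mulrDr.
Qed.

Lemma amulZl k (a b : A) : amul (ascale k a) b = ascale k (amul a b).
Proof.
apply: functional_extensionality => m; rewrite /ascale !amulE; case: ifP => _; last by rewrite mulr0.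
rewrite conv_mull; apply: conv_eq => p q; rewrite conv_mull; apply: conv_eq => p' q'.
by rewrite mulrA.
Qed.

Lemma amulZr k (a b : A) : amul a (ascale k b) = ascale k (amul a b).
Proof.
apply: functional_extensionality => m; rewrite /ascale !amulE; case: ifP => _; last by rewrite mulr0.
rewrite conv_mull; apply: conv_eq => p q; rewrite conv_mull; apply: conv_eq => p' q'.
by rewrite mulrCA.
Qed.

Lemma amulA (a b c : A) : amul (amul a b) c = amul a (amul b c).
Proof.
apply: functional_extensionality => m; rewrite !amulE; case: ifP => // /andP[c1 c2].
transitivity (conv m.1 (fun t r => conv m.2 (fun t' r' => conv t (fun p q =>
   conv t' (fun p' q' => a (p, p') * b (q, q') * c (r, r')))))).
  apply: conv_ext_in => t r Htr; apply: conv_ext_in => t' r' Htr'.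
  have /andP[ct _] := canon_splits c1 Htr; have /andP[ct' _] := canon_splits c2 Htr'.
  rewrite amulE /canonm /= ct ct' /= conv_mulr; apply: conv_eq => p q.
  by rewrite conv_mulr.
transitivity (conv m.1 (fun p t => conv m.2 (fun p' t' => conv t (fun q r =>
   conv t' (fun q' r' => a (p, p') * b (q, q') * c (r, r')))))); last first.
  apply: conv_ext_in => p t Hpt; apply: conv_ext_in => p' t' Hpt'.
  have /andP[_ ct] := canon_splits c1 Hpt; have /andP[_ ct'] := canon_splits c2 Hpt'.
  rewrite amulE /canonm /= ct ct' /= conv_mull; apply: conv_eq => q r.
  by rewrite conv_mull; apply: conv_eq => q' r'; rewrite mulrA.
under conv_eq do rewrite conv_exch.
rewrite (conv_assoc m.1 (fun p q r => conv m.2 (fun t' r' => conv t' (fun p' q' =>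
   a (p, p') * b (q, q') * c (r, r'))))).
apply: conv_eq => p t; rewrite [RHS]conv_exch; apply: conv_eq => q r.
by rewrite (conv_assoc m.2 (fun p' q' r' => a (p, p') * b (q, q') * c (r, r'))).
Qed.

Definition bihomog (i j : bool) (a : A) : Prop :=
  forall m, a m != 0 -> odd (size m.1) = i /\ odd (size m.2) = j.

Lemma amul_comm i j k l (a b : A) : bihomog i j a -> bihomog k l b ->
  amul a b = ascale ((-1) ^+ ((i && k) (+) (j && l))) (amul b a).
Proof.
move=> ha hb; apply: functional_extensionality => m; rewrite /ascale !amulE.
case: ifP => [/andP[c1 c2]|_]; last by rewrite mulr0.
have u1 : uniq m.1 by apply: sorted_uniq c1; [exact: ltn_trans|exact: ltnn].
have u2 : uniq m.2 by apply: sorted_uniq c2; [exact: ltn_trans|exact: ltnn].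
rewrite (conv_swap _ u1) conv_mull; apply: conv_eq => p q.
rewrite (conv_swap _ u2) !conv_mull; apply: conv_eq => p' q'.
have [->|na] := eqVneq (a (q, q')) 0; first by rewrite !(mulr0, mul0r).
have [->|nb] := eqVneq (b (p, p')) 0; first by rewrite !(mulr0, mul0r).
have [/= hi hj] := ha _ na; have [/= hk hl] := hb _ nb.
rewrite -[(-1) ^+ (size p * size q)]signr_odd -[(-1) ^+ (size p' * size q')]signr_odd.
rewrite !oddM hi hj hk hl signr_addb (andbC k i) (andbC l j).
ring.
Qed.

Definition apart (i : bool) (a : A) : A := fun m => if odd (size m.1) == i then a m else 0.

Lemma apart_split (a : A) : a = aadd (apart false a) (apart true a).
Proof.
apply: functional_extensionality => m; rewrite /aadd /apart.
by case: (odd (size m.1)); rewrite ?addr0 ?add0r.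
Qed.

Lemma apart_bihomog d i (a : A) : homog d a -> bihomog i d (apart i a).
Proof.
move=> [_ h] m; rewrite /apart; case: (odd (size m.1) =P i) => [Hi Hm|_]; last by rewrite eqxx.
by split; last exact: h.
Qed.
End Alg.

Section Final.
Variable K : fieldType.
Local Notation A := (A K).

Lemma swapH i j k l (x y w : A) : bihomog i j x -> bihomog k l y ->
  amul x (amul y w) = ascale ((-1) ^+ ((i && k) (+) (j && l))) (amul y (amul x w)).
Proof. by move=> hx hy; rewrite -amulA (amul_comm hx hy) amulZl amulA. Qed.

Lemma red1 d (F : A -> A) : (forall a b, F (aadd a b) = aadd (F a) (F b)) ->
  (forall i a, bihomog i d a -> is_zero (F a)) -> forall a, homog d a -> is_zero (F a).
Proof.
move=> hF h a ha m; rewrite (apart_split a) hF /aadd.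
by rewrite (h _ _ (apart_bihomog (i:=false) ha)) (h _ _ (apart_bihomog (i:=true) ha)) addr0.
Qed.
End Final.

Ltac addit :=
  let a := fresh "a" in let b := fresh "b" in let m := fresh "m" in
  move=> a b /=; apply: functional_extensionality => m;
  rewrite /acomm3 /acomm /ajord /asub ?aoppE;
  rewrite ?(amulDl, amulDr, amulZl, amulZr);
  rewrite /aadd /ascale; ring.


Ltac expand := rewrite /acomm3 /acomm /ajord /asub ?aoppE;
  rewrite ?(amulDl, amulDr, amulZl, amulZr, amulA).

Ltac norm3 h1 h2 h3 :=
  expand;
  do ![progress rewrite ?amulA ?amulZl ?amulZr ?(swapH _ h2 h1) ?(swapH _ h3 h1) ?(swapH _ h3 h2)
   ?(amul_comm h2 h1) ?(amul_comm h3 h1) ?(amul_comm h3 h2)];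
  let m := fresh "m" in move=> m; rewrite /aadd /ascale.

Ltac norm4 h1 h2 h3 h4 :=
  expand;
  do ![progress rewrite ?amulA ?amulZl ?amulZr ?(swapH _ h2 h1) ?(swapH _ h3 h1) ?(swapH _ h3 h2)
   ?(swapH _ h4 h1) ?(swapH _ h4 h2) ?(swapH _ h4 h3)
   ?(amul_comm h2 h1) ?(amul_comm h3 h1) ?(amul_comm h3 h2)
   ?(amul_comm h4 h1) ?(amul_comm h4 h2) ?(amul_comm h4 h3)];
  let m := fresh "m" in move=> m; rewrite /aadd /ascale.

Ltac fin := rewrite /= ?expr0 ?expr1; ring.

Unset Implicit Arguments.

Theorem lemma6 (K : fieldType)
  (K_infinite : forall s : seq K, exists x : K, x \notin s)
  (K_char : ~~ (2%N \in [pchar K])) :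
  (* (1) [y1,y2,y3] and [y1,y2,z3] *)
  (forall y1 y2 y3 : A K, homog false y1 -> homog false y2 -> homog false y3 ->
     is_zero (acomm3 y1 y2 y3)) /\
  (forall (y1 y2 : A K) (z3 : A K), homog false y1 -> homog false y2 -> homog true z3 ->
     is_zero (acomm3 y1 y2 z3)) /\
  (* (2) [y1,z2,y3] *)
  (forall (y1 z2 y3 : A K), homog false y1 -> homog true z2 -> homog false y3 ->
     is_zero (acomm3 y1 z2 y3)) /\
  (* (3) [y1,z2] o z3 *)
  (forall (y1 z2 z3 : A K), homog false y1 -> homog true z2 -> homog true z3 ->
     is_zero (ajord (acomm y1 z2) z3)) /\
  (* (4) [z1 o z2, z3] *)
  (forall (z1 z2 z3 : A K), homog true z1 -> homog true z2 -> homog true z3 ->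
     is_zero (acomm (ajord z1 z2) z3)) /\
  (* (5) (z1 o z2)(z3 o z4) - (z1 o z3)(z2 o z4) *)
  (forall (z1 z2 z3 z4 : A K), homog true z1 -> homog true z2 -> homog true z3 ->
     homog true z4 ->
     is_zero (asub (amul (ajord z1 z2) (ajord z3 z4))
                   (amul (ajord z1 z3) (ajord z2 z4)))) /\
  (* (6) [x1,y2][y3,x4] + [x1,y3][y2,x4], x1 in {y1,z1}, x4 in {y4,z4} *)
  (forall (d1 d4 : bool) (x1 y2 y3 x4 : A K), homog d1 x1 -> homog false y2 ->
     homog false y3 -> homog d4 x4 ->
     is_zero (aadd (amul (acomm x1 y2) (acomm y3 x4))
                   (amul (acomm x1 y3) (acomm y2 x4)))) /\
  (* (7) [y1,z2](z3 o z4) - [y1,z3](z2 o z4) *)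
  (forall (y1 z2 z3 z4 : A K), homog false y1 -> homog true z2 -> homog true z3 ->
     homog true z4 ->
     is_zero (asub (amul (acomm y1 z2) (ajord z3 z4))
                   (amul (acomm y1 z3) (ajord z2 z4)))).
Proof.
split; [|split; [|split; [|split; [|split; [|split; [|split]]]]]].
- move=> x1 x2 x3 h1 h2 h3.
  move: x1 h1; apply: red1; first by addit. move=> i1 x1 h1.
  move: x2 h2; apply: red1; first by addit. move=> i2 x2 h2.
  move: x3 h3; apply: red1; first by addit. move=> i3 x3 h3.
  norm3 h1 h2 h3; case: i1 i2 i3 {h1 h2 h3} => [] [] []; fin.
- move=> x1 x2 x3 h1 h2 h3.
  move: x1 h1; apply: red1; first by addit. move=> i1 x1 h1.
  move: x2 h2; apply: red1; first by addit. move=> i2 x2 h2.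
  move: x3 h3; apply: red1; first by addit. move=> i3 x3 h3.
  norm3 h1 h2 h3; case: i1 i2 i3 {h1 h2 h3} => [] [] []; fin.
- move=> x1 x2 x3 h1 h2 h3.
  move: x1 h1; apply: red1; first by addit. move=> i1 x1 h1.
  move: x2 h2; apply: red1; first by addit. move=> i2 x2 h2.
  move: x3 h3; apply: red1; first by addit. move=> i3 x3 h3.
  norm3 h1 h2 h3; case: i1 i2 i3 {h1 h2 h3} => [] [] []; fin.
- move=> x1 x2 x3 h1 h2 h3.
  move: x1 h1; apply: red1; first by addit. move=> i1 x1 h1.
  move: x2 h2; apply: red1; first by addit. move=> i2 x2 h2.
  move: x3 h3; apply: red1; first by addit. move=> i3 x3 h3.
  norm3 h1 h2 h3; case: i1 i2 i3 {h1 h2 h3} => [] [] []; fin.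
- move=> x1 x2 x3 h1 h2 h3.
  move: x1 h1; apply: red1; first by addit. move=> i1 x1 h1.
  move: x2 h2; apply: red1; first by addit. move=> i2 x2 h2.
  move: x3 h3; apply: red1; first by addit. move=> i3 x3 h3.
  norm3 h1 h2 h3; case: i1 i2 i3 {h1 h2 h3} => [] [] []; fin.
- move=> x1 x2 x3 x4 h1 h2 h3 h4.
  move: x1 h1; apply: red1; first by addit. move=> i1 x1 h1.
  move: x2 h2; apply: red1; first by addit. move=> i2 x2 h2.
  move: x3 h3; apply: red1; first by addit. move=> i3 x3 h3.
  move: x4 h4; apply: red1; first by addit. move=> i4 x4 h4.
  norm4 h1 h2 h3 h4; case: i1 i2 i3 i4 {h1 h2 h3 h4} => [] [] [] []; fin.
- move=> d1 d4 x1 x2 x3 x4 h1 h2 h3 h4.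
  move: x1 h1; apply: red1; first by addit. move=> i1 x1 h1.
  move: x2 h2; apply: red1; first by addit. move=> i2 x2 h2.
  move: x3 h3; apply: red1; first by addit. move=> i3 x3 h3.
  move: x4 h4; apply: red1; first by addit. move=> i4 x4 h4.
  norm4 h1 h2 h3 h4; case: i1 i2 i3 i4 d1 d4 {h1 h2 h3 h4} => [] [] [] [] [] []; fin.
- move=> x1 x2 x3 x4 h1 h2 h3 h4.
  move: x1 h1; apply: red1; first by addit. move=> i1 x1 h1.
  move: x2 h2; apply: red1; first by addit. move=> i2 x2 h2.
  move: x3 h3; apply: red1; first by addit. move=> i3 x3 h3.
  move: x4 h4; apply: red1; first by addit. move=> i4 x4 h4.
  norm4 h1 h2 h3 h4; case: i1 i2 i3 i4 {h1 h2 h3 h4} => [] [] [] []; fin.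
Qed.
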